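(* Assume $p=2$ and let $s\ge1$. Then $V^{s-1}:K\to W_s(K)$ induces an isomorphism $\mathrm{fil}'_2K/\mathrm{fil}'_1K\xrightarrow{\sim}\mathrm{fil}'_2W_s(K)/\mathrm{fil}'_1W_s(K)$.
   Context: $K$ is a complete discrete valuation field of characteristic $p>0$ with normalized valuation $\mathrm{ord}_K$. $W_s(K)$: Witt vectors of length $s$, elements $(a_{s-1},\dots,a_0)$, $V(a_{s-1},\dots,a_0)=(0,a_{s-1},\dots,a_0)$, $W_1(K)=K$. $\mathrm{ord}_K(a)=\min_ip^i\mathrm{ord}_K(a_i)$, $\mathrm{fil}_nW_s(K)=\{a:\mathrm{ord}_K(a)\ge-n\}$. For $m\ge1$, with $s'=\min\{\mathrm{ord}_p(m),s\}$, $\mathrm{fil}'_mW_s(K)=\mathrm{fil}_{m-1}W_s(K)+V^{s-s'}\mathrm{fil}_mW_{s'}(K)$. *)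

(* Defs.v *)
From HB Require Import structures.
From mathcomp Require Import all_boot all_order all_algebra.
Set Implicit Arguments. Unset Strict Implicit. Unset Printing Implicit Defensive.
Import Order.TTheory GRing.Theory Num.Theory.
Local Open Scope ring_scope.

(* mp k = Z[T_0, ..., T_{k-1}], with T_{k-1} the outermost variable. *)
Fixpoint mp (k : nat) : idomainType :=
  if k is k'.+1 then {poly mp k'} else int.

Fixpoint mvar (k : nat) (i : nat) : mp k :=
  match k as k0 return mp k0 with
  | 0 => 0
  | k'.+1 => if i == k' then ('X : {poly mp k'}) else (mvar k' i)%:P
  end.

(* coefficientwise Euclidean division by an integer (used only for exact
   divisions) *)
Fixpoint mdivz (k : nat) : mp k -> int -> mp k :=
  match k as k0 return mp k0 -> int -> mp k0 with
  | 0 => fun q d => ((q : int) %/ d)%Z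
  | k'.+1 => fun q d => map_poly (fun c : mp k' => @mdivz k' c d) (q : {poly mp k'})
  end.

Fixpoint mev (A : comNzRingType) (k : nat) : mp k -> (nat -> A) -> A :=
  match k as k0 return mp k0 -> (nat -> A) -> A with
  | 0 => fun q _ => (q : int)%:~R
  | k'.+1 => fun q x =>
      \sum_(i < size (q : {poly mp k'})) @mev A k' (q : {poly mp k'})`_i x * x k' ^+ i
  end.

Definition wX (s j : nat) : mp (2 * s) := mvar (2 * s) j.
Definition wY (s j : nat) : mp (2 * s) := mvar (2 * s) (s + j).

Definition wittpol (p s n : nat) (Z : nat -> mp (2 * s)) : mp (2 * s) :=
  \sum_(i < n.+1) (p ^ i)%:R * Z i ^+ (p ^ (n - i)).

(* [:: S_0; ...; S_n ], the Witt addition polynomials, defined by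
   W_n(S) = W_n(X) + W_n(Y), i.e.
   S_n = (W_n(X) + W_n(Y) - sum_{i<n} p^i S_i^(p^(n-i))) / p^n   (exact). *)
Fixpoint Slist (p s n : nat) : seq (mp (2 * s)) :=
  match n with
  | 0 => [:: wX s 0 + wY s 0]
  | n'.+1 =>
      let l := Slist p s n' in
      rcons l (mdivz
        (@wittpol p s n (wX s) + @wittpol p s n (wY s)
         - \sum_(i < n) (p ^ i)%:R * (nth 0 l i) ^+ (p ^ (n - i)))
        (p ^ n)%:Z)
  end.

Definition Spol (p s n : nat) : mp (2 * s) := nth 0 (Slist p s n) n.

(* Paper's indexing: a = (a_{s-1}, ..., a_0) is stored as a : 'I_s -> K with
   a i = a_i.  The usual Witt coordinate x_j is a_{s-1-j}. *)
Definition wvec (K : Type) (s : nat) := {ffun 'I_s -> K}.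

Definition wget (K : nzRingType) (s : nat) (a : wvec K s) (j : nat) : K :=
  match (insub j : option 'I_s) with Some i => a i | None => 0 end.

Definition wadd (p : nat) (K : comNzRingType) (s : nat) (a b : wvec K s)
  : wvec K s :=
  [ffun i : 'I_s =>
     mev (Spol p s (s - 1 - i))
         (fun j => if (j < s)%N then wget a (s - 1 - j)
                   else wget b (s - 1 - (j - s)))].

(* Verschiebung iterated: V^(s - s') : W_{s'}(K) -> W_s(K) for s' <= s;
   V(a_{s-1},...,a_0) = (0,a_{s-1},...,a_0), so V^(s-s') a has
   i-th component a_i for i < s' and 0 otherwise. *)
Definition Vto (K : nzRingType) (s' s : nat) (a : wvec K s') : wvec K s :=
  [ffun i : 'I_s => wget a i].

(* v a is meaningful for a != 0; ord_K(0) = +oo is handled by the case a = 0. *)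
Definition is_normalized_dvaluation (K : fieldType) (v : K -> int) : Prop :=
  [/\ forall a b : K, a != 0 -> b != 0 -> v (a * b) = v a + v b,
      forall a b : K, a != 0 -> b != 0 -> a + b != 0 ->
        Num.min (v a) (v b) <= v (a + b)
    & exists pi : K, pi != 0 /\ v pi = 1].

(* "ord_K(x) >= N" with ord_K(0) = +oo *)
Definition ord_ge (K : fieldType) (v : K -> int) (x : K) (N : int) : Prop :=
  x = 0 \/ N <= v x.

Definition dv_complete (K : fieldType) (v : K -> int) : Prop :=
  forall u : nat -> K,
    (forall N : int, exists n0 : nat, forall m n : nat,
        (n0 <= m)%N -> (n0 <= n)%N -> ord_ge v (u m - u n) N) ->
    exists l : K, forall N : int, exists n0 : nat, forall n : nat,
        (n0 <= n)%N -> ord_ge v (u n - l) N.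

Definition fil (p : nat) (K : fieldType) (v : K -> int) (n : nat) (s : nat)
  (a : wvec K s) : Prop :=
  forall i : 'I_s, a i = 0 \/ - (n%:Z) <= (p ^ i)%:Z * v (a i).

Definition filp (p : nat) (K : fieldType) (v : K -> int) (m : nat) (s : nat)
  (x : wvec K s) : Prop :=
  exists (y : wvec K s) (z : wvec K (minn (logn p m) s)),
    [/\ fil p v (m - 1) y, fil p v m z & x = wadd p y (Vto s z)].

(* Main.v *)
Require Import Defs.
From HB Require Import structures.
From mathcomp Require Import all_boot all_order all_algebra.
From mathcomp Require Import zify ring.
Import Order.TTheory GRing.Theory Num.Theory.
Local Open Scope ring_scope.



Fixpoint mz (Z : pred nat) (k : nat) : {rmorphism mp k -> mp k} :=
  match k as k0 return {rmorphism mp k0 -> mp k0} with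
  | 0 => (idfun : {rmorphism int -> int})
  | k'.+1 => if Z k' then ((polyC \o mz Z k') \o horner_eval 0 : {rmorphism {poly mp k'} -> {poly mp k'}})
             else (map_poly (mz Z k') : {rmorphism {poly mp k'} -> {poly mp k'}})
  end.

Lemma mzT (Z : pred nat) k (q : mp k.+1) : Z k -> mz Z k.+1 q = (mz Z k ((q : {poly mp k})`_0))%:P.
Proof. by move=> hz; rewrite /= hz /= horner_evalE horner_coef0. Qed.

Lemma mzF (Z : pred nat) k (q : mp k.+1) : ~~ Z k -> mz Z k.+1 q = map_poly (mz Z k) (q : {poly mp k}).
Proof. by move=> hz; rewrite /= (negbTE hz). Qed.

Lemma mdivz0 k d : @mdivz k 0 d = 0.
Proof. case: k => [|k] /=; [exact: div0z | exact: map_poly0]. Qed.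

Lemma mz_mdivz (Z : pred nat) k (q : mp k) d : mz Z k (mdivz q d) = mdivz (mz Z k q) d.
Proof.
elim: k q => [|k IH] q //=.
case hz: (Z k) => /=.
  rewrite !horner_evalE !horner_coef0 coef_map_id0 ?mdivz0 // IH.
  apply/polyP => i; rewrite coef_map_id0 ?mdivz0 // !coefC.
  by case: (i == 0)%N; rewrite ?mdivz0.
apply/polyP => i; rewrite !coef_map_id0 ?mdivz0 ?rmorph0 // ?IH //.
Qed.

Lemma mdivzK k (n : nat) (q : mp k) : (0 < n)%N -> mdivz ((n%:R : mp k) * q) (n%:Z) = q.
Proof.
move=> n0; elim: k q => [|k IH] q /=.
  change ((((n%:R : int) * (q : int)) %/ n)%Z = q).
  by rewrite natz mulKz // eqz_nat -lt0n.
apply/polyP => i; rewrite coef_map_id0 ?mdivz0 //.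
by rewrite -polyC_natr coefCM IH.
Qed.

Lemma size_map_le (aR rR : nzSemiRingType) (f : aR -> rR) (p : {poly aR}) :
  (size (map_poly f p) <= size p)%N.
Proof. exact: size_poly. Qed.

Lemma mz_mvar (Z : pred nat) k i : (i < k)%N ->
  mz Z k (mvar k i) = if Z i then 0 else mvar k i.
Proof.
elim: k => [//|k IH] ik /=.
case: eqP => [->|/eqP ne].
  case hz: (Z k) => /=; first by rewrite horner_evalE horner_coef0 coefX rmorph0.
  by rewrite map_polyX.
have ik' : (i < k)%N by rewrite ltnS leq_eqVlt (negbTE ne) in ik.
case hz: (Z k) => /=.
  rewrite horner_evalE hornerC.
  transitivity ((if Z i then 0 else mvar k i)%:P : {poly mp k}); first by congr (_%:P); exact: IH.
  by case: (Z i).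
rewrite map_polyC.
transitivity ((if Z i then 0 else mvar k i)%:P : {poly mp k}); first by congr (_%:P); exact: IH.
by case: (Z i).
Qed.

Section Mev.
Variable A : comNzRingType.

Lemma mev0 k (x : nat -> A) : mev (0 : mp k) x = 0.
Proof. by case: k => [|k] /=; [rewrite mulr0z | rewrite size_poly0 big_ord0]. Qed.

Lemma mev_wide k (q : mp k.+1) (x : nat -> A) n : (size (q : {poly mp k}) <= n)%N ->
  mev q x = \sum_(i < n) mev (q : {poly mp k})`_i x * x k ^+ i.
Proof.
move=> hn /=; rewrite (big_ord_widen n (fun i => mev (q : {poly mp k})`_i x * x k ^+ i) hn).
rewrite big_mkcond /=; apply: eq_bigr => i _.
by case: ltnP => // h; rewrite nth_default // mev0 mul0r.
Qed.

Lemma mevC k (c : mp k) (x : nat -> A) : mev (c%:P : mp k.+1) x = mev c x.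
Proof.
by rewrite (@mev_wide k _ x 1) ?size_polyC_leq1 // big_ord1 coefC /= expr0 mulr1.
Qed.

Lemma mev1 k (x : nat -> A) : mev (1 : mp k) x = 1.
Proof.
elim: k => [|k IH]; first by rewrite /= mulr1z.
by rewrite -[1 : mp k.+1]/((1 : mp k)%:P) mevC IH.
Qed.

Lemma mevD k (p q : mp k) (x : nat -> A) : mev (p + q) x = mev p x + mev q x.
Proof.
elim: k p q => [|k IH] p q; first exact: intrD.
set n := maxn (size (p : {poly mp k})) (size (q : {poly mp k})).
rewrite (@mev_wide k (p + q) x n) ?size_add //.
rewrite (@mev_wide k p x n) ?leq_maxl // (@mev_wide k q x n) ?leq_maxr //.
rewrite -big_split /=; apply: eq_bigr => i _.
by rewrite coefD IH mulrDl.
Qed.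

Lemma mev_mvar k i (x : nat -> A) : (i < k)%N -> mev (mvar k i) x = x i.
Proof.
elim: k => [//|k IH] ik.
rewrite [mvar _ _]/=.
case: eqP => [->|/eqP ne].
  rewrite (@mev_wide k 'X x 2) ?size_polyX // big_ord_recr big_ord1 /=.
  by rewrite !coefX /= mev0 mul0r add0r mev1 mul1r expr1.
have ik' : (i < k)%N by rewrite ltnS leq_eqVlt (negbTE ne) in ik.
by rewrite mevC IH.
Qed.

Lemma mev_mz (Z : pred nat) k (q : mp k) (x : nat -> A) :
  (forall j, (j < k)%N -> Z j -> x j = 0) -> mev (mz Z k q) x = mev q x.
Proof.
elim: k q => [//|k IH] q hx.
have hx' : forall j, (j < k)%N -> Z j -> x j = 0 by move=> j jk; apply: hx; apply: ltnW.
case hz: (Z k).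
  rewrite mzT // mevC IH //.
  rewrite (@mev_wide k q x (size (q : {poly mp k})).+1) // big_ord_recl /= expr0 mulr1.
  rewrite big1 ?addr0 // => i _; by rewrite hx // expr0n mulr0.
rewrite mzF ?hz // (@mev_wide k _ x (size (q : {poly mp k}))) ?size_map_le //.
apply: eq_bigr => i _; by rewrite coef_map_id0 ?rmorph0 // IH.
Qed.
End Mev.



Lemma size_Slist p s n : size (Slist p s n) = n.+1.
Proof. by elim: n => [//|n IH] /=; rewrite size_rcons IH. Qed.

Lemma nth_Slist p s n i : (i <= n)%N -> nth 0 (Slist p s n) i = Spol p s i.
Proof.
elim: n i => [|n IH] i hi; first by case: i hi.
rewrite leq_eqVlt in hi; case/orP: hi => [/eqP ->|hi]; first by [].
by rewrite /= nth_rcons size_Slist hi IH.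
Qed.

Lemma SpolS p s n : Spol p s n.+1 =
  mdivz (wittpol p n.+1 (wX s) + wittpol p n.+1 (wY s)
         - \sum_(i < n.+1) (p ^ i)%:R * Spol p s i ^+ (p ^ (n.+1 - i))) (p ^ n.+1)%:Z.
Proof.
rewrite /Spol /= nth_rcons size_Slist ltnn eqxx; congr mdivz; congr (_ - _).
by apply: eq_bigr => i _; rewrite nth_Slist // -ltnS.
Qed.

Lemma powS_ab (R : comNzRingType) (a b : R) m : (a = 0 \/ b = 0) -> (0 < m)%N ->
  (a + b) ^+ m = a ^+ m + b ^+ m.
Proof.
move=> [->|->] hm; by rewrite ?add0r ?addr0 expr0n (gtn_eqF hm) ?add0r ?addr0.
Qed.

Lemma addr_simpl (R : comNzRingType) (A a x B b y : R) :
  A + a + x + (B + b + y) - (A + a + (B + b)) = x + y.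
Proof. ring. Qed.

Lemma key (Z : pred nat) s n : (n < s)%N ->
  (forall j, (j < n)%N -> Z j || Z (s + j)) ->
  forall i, (i <= n)%N ->
  mz Z (2 * s) (Spol 2 s i) = mz Z (2 * s) (wX s i) + mz Z (2 * s) (wY s i).
Proof.
elim: n => [|n IH] ns hZ i hi.
  by case: i hi => // _; rewrite /Spol /= rmorphD.
rewrite leq_eqVlt in hi; case/orP: hi => [/eqP ->|hi]; last first.
  apply: IH => //; [exact: ltnW | by move=> j jn; apply: hZ; apply: ltnW].
set s2 := (2 * s)%N.
rewrite SpolS mz_mdivz !rmorphB !rmorphD /= !rmorph_sum /=.
have ab : forall j, (j < n.+1)%N -> mz Z s2 (wX s j) = 0 \/ mz Z s2 (wY s j) = 0.
  move=> j jn; have := hZ j jn; rewrite /wX /wY !mz_mvar; first last.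
  - by rewrite /s2; lia.
  - by rewrite /s2; lia.
  by case/orP => ->; [left | right].
rewrite (eq_bigr (fun i : 'I_n.+1 => (2 ^ i)%:R * mz Z s2 (wX s i) ^+ (2 ^ (n.+1 - i))
                  + (2 ^ i)%:R * mz Z s2 (wY s i) ^+ (2 ^ (n.+1 - i)))); last first.
  move=> j _; rewrite rmorphM rmorphXn rmorph_nat IH; first last.
  - by rewrite -ltnS.
  - by move=> l ln; apply: hZ; apply: ltnW.
  - exact: ltnW.
  by rewrite powS_ab ?expn_gt0 // ?mulrDr //; apply: ab.
rewrite big_split /=.
under eq_bigr => j _ do rewrite rmorphM rmorphXn rmorph_nat.
under [X in _ + X - _]eq_bigr => j _ do rewrite rmorphM rmorphXn rmorph_nat.
rewrite !big_ord_recr /= subnn expn0 !expr1.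
rewrite addr_simpl -mulrDr.
by rewrite mdivzK // expn_gt0.
Qed.



Lemma mev_Spol (K : fieldType) s n (x : nat -> K) : (n < s)%N ->
  (forall j, (j < n)%N -> x j = 0 \/ x (s + j) = 0) ->
  mev (Spol 2 s n) x = x n + x (s + n).
Proof.
move=> ns hx.
set Z := fun j => x j == 0.
have hv : forall j, (j < 2 * s)%N -> Z j -> x j = 0 by move=> j _ /eqP.
rewrite -(@mev_mz K Z (2 * s) _ x hv) (@key Z s n) //.
  rewrite (@mevD K (2 * s)) !(@mev_mz K Z (2 * s) _ x hv).
  by rewrite /wX /wY !(@mev_mvar K (2 * s)) //; lia.
move=> j jn; rewrite /Z; case: (hx j jn) => ->; by rewrite eqxx ?orbT.
Qed.

Lemma wadd_comp (K : fieldType) s (a b : wvec K s) (i : 'I_s) :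
  (forall m : 'I_s, (i < m)%N -> a m = 0 \/ b m = 0) ->
  wadd 2 a b i = a i + b i.
Proof.
move=> h; rewrite /wadd ffunE mev_Spol; first last.
- move=> j jn.
  have js : (j < s)%N by lia.
  have hm : (s - 1 - j < s)%N by lia.
  rewrite js (_ : (s + j < s)%N = false); last by lia.
  rewrite (_ : (s + j - s)%N = j); last by lia.
  rewrite /wget insubT /=.
  apply: (h (Ordinal hm)) => /=; lia.
- have := ltn_ord i; lia.
have e1 : (s - 1 - i < s)%N by have := ltn_ord i; lia.
rewrite e1 (_ : (s + (s - 1 - i) < s)%N = false); last by lia.
rewrite (_ : (s - 1 - (s + (s - 1 - i) - s))%N = i); last by have := ltn_ord i; lia.
rewrite (_ : (s - 1 - (s - 1 - i))%N = i); last by have := ltn_ord i; lia.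
by rewrite /wget valK.
Qed.



Lemma intlem (c w : int) : 2 <= c -> -1 <= c * w -> 0 <= c * w.
Proof.
move=> h1 h2.
case: (lerP 0 w) => hw; first by apply: mulr_ge0 => //; lia.
have : c * w <= c * (-1) by rewrite ler_wpM2l //; lia.
lia.
Qed.

Section W.
Variable K : fieldType.

Lemma wget_small n (a : wvec K n) m : (n <= m)%N -> wget a m = 0.
Proof. by move=> h; rewrite /wget insubF // ltnNge h. Qed.

Lemma wget_ord n (a : wvec K n) (i : 'I_n) : wget a i = a i.
Proof. by rewrite /wget valK. Qed.

Lemma wget1 (a : wvec K 1) m : wget a m = if m == 0%N then a ord0 else 0.
Proof.
case: m => [|m] /=; first by rewrite (@wget_ord 1 a ord0).
by rewrite wget_small.
Qed.

Lemma Vto_E s' s (a : wvec K s') (i : 'I_s) : Vto s a i = wget a i.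
Proof. by rewrite ffunE. Qed.

Lemma wget_Vto s' s (a : wvec K s') m : wget (Vto s a) m = if (m < s)%N then wget a m else 0.
Proof.
case: ltnP => h; last exact: wget_small.
by rewrite /wget insubT /= ffunE.
Qed.

Lemma fil_Vto (v : K -> int) p n s' s (z : wvec K s') : fil p v n z -> fil p v n (Vto s z).
Proof.
move=> hz i; rewrite ffunE /wget; case: insubP => [j _ hj|_]; last by left.
by have := hz j; rewrite hj.
Qed.

Lemma filp1 (v : K -> int) s (x : wvec K s) : filp 2 v 1 x <-> fil 2 v 0 x.
Proof.
split.
  move=> [y [z [fy _ ->]]] i.
  have l1 : logn 2 1 = 0%N by [].
  rewrite wadd_comp; last by move=> m _; right; rewrite Vto_E wget_small // l1 min0n.
  by rewrite Vto_E wget_small ?l1 ?min0n // addr0; apply: fy.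
move=> fx; exists x, [ffun _ => 0]; split => //.
  by move=> i; left; rewrite ffunE.
apply/ffunP => i; rewrite wadd_comp.
  rewrite Vto_E /wget; case: insub => [j|] /=; last by rewrite addr0.
  by rewrite (@ffunE _ (fun _ => K) (fun _ => 0)) addr0.
move=> m _; right; rewrite Vto_E /wget; case: insub => [j|] //=.
by rewrite (@ffunE _ (fun _ => K) (fun _ => 0)).
Qed.

End W.



Theorem lemma1p9 (K : fieldType) (v : K -> int)
  (hv : is_normalized_dvaluation v) (hc : dv_complete v)
  (hchar : 2%N \in [pchar K]) (s : nat) (hs : (1 <= s)%N) :
  [/\ forall a b : wvec K 1,
        Vto s (wadd 2 a b) = wadd 2 (Vto s a) (Vto s b),
      forall a : wvec K 1, filp 2 v 2 a -> filp 2 v 2 (Vto s a),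
      forall a : wvec K 1, filp 2 v 1 a -> filp 2 v 1 (Vto s a),
      forall a : wvec K 1, filp 2 v 2 a -> filp 2 v 1 (Vto s a) -> filp 2 v 1 a
    & forall x : wvec K s, filp 2 v 2 x ->
        exists (a : wvec K 1) (y : wvec K s),
          [/\ filp 2 v 2 a, filp 2 v 1 y & x = wadd 2 (Vto s a) y]].
Proof.
have l2 : logn 2 2 = 1%N by [].
have w1 : forall (a b : wvec K 1), wadd 2 a b ord0 = a ord0 + b ord0.
  by move=> a b; rewrite wadd_comp // => m; rewrite (ord1 m).
have VtoS : forall (a : wvec K 1) (m : 'I_s), (0 < m)%N -> Vto s a m = 0.
  by move=> a m hm; rewrite Vto_E wget_small.
have P1 : forall a b : wvec K 1, Vto s (wadd 2 a b) = wadd 2 (Vto s a) (Vto s b).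
  move=> a b; apply/ffunP => i.
  rewrite wadd_comp; last by move=> m hm; left; apply: VtoS; lia.
  rewrite !Vto_E !wget1; case: eqP => _; first by rewrite w1.
  by rewrite addr0.
split => //.
- move=> a [y [z [fy fz ->]]].
  exists (Vto s y), (Vto (minn (logn 2 2) s) z); split.
  + exact: fil_Vto.
  + exact: fil_Vto.
  apply/ffunP => i.
  rewrite wadd_comp; last first.
    move=> m hm; right; rewrite Vto_E wget_Vto; case: ifP => // _.
    by apply: wget_small; rewrite l2; lia.
  rewrite !Vto_E !wget_Vto !wget1.
  case: eqP => hi.
    rewrite w1 Vto_E wget1 eqxx.
    by rewrite hi /= (_ : (0 < minn (logn 2 2) s)%N) // l2; lia.
  by rewrite add0r; case: ifP.
- move=> a /(@filp1 K v) fa; apply/(@filp1 K v); exact: fil_Vto.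
- move=> a _ /(@filp1 K v) fa; apply/(@filp1 K v) => i.
  have := fa (Ordinal hs); rewrite Vto_E wget1 /= (ord1 i) /=.
  by [].
move=> x [y0 [z [fy fz ->]]].
set X := wadd 2 y0 (Vto s z).
have hX : forall i : 'I_s, X i = y0 i + wget z i.
  move=> i; rewrite /X wadd_comp ?Vto_E // => m hm; right.
  by rewrite Vto_E wget_small // l2; lia.
set o : 'I_s := Ordinal hs.
exists [ffun _ : 'I_1 => X o], [ffun i : 'I_s => if nat_of_ord i == 0%N then 0 else X i].
split.
- exists [ffun _ : 'I_1 => y0 o], (Vto (minn (logn 2 2) 1) z); split.
  + move=> i; rewrite ffunE (ord1 i) /=; exact: (fy o).
  + exact: fil_Vto.
  apply/ffunP => i; rewrite (ord1 i) w1.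
  rewrite [[ffun _ => X o] _]ffunE hX [[ffun _ => y0 o] _]ffunE /= Vto_E wget_Vto.
  by rewrite (_ : (0 < minn (logn 2 2) 1)%N) // l2.
- apply/(@filp1 K v) => i; rewrite ffunE; case: eqP => hi; first by left.
  rewrite hX wget_small; last by rewrite l2; lia.
  rewrite addr0; case: (fy i) => h; first by left.
  right; apply: intlem => //.
  have : (2 <= 2 ^ i)%N by rewrite -{1}(expn1 2) leq_exp2l //; lia.
  by move=> h2; rewrite lez_nat.
apply/ffunP => i; rewrite [RHS]wadd_comp; last first.
  move=> m hm; left; apply: VtoS; lia.
rewrite Vto_E wget1 !ffunE; case: eqP => hi.
  by rewrite addr0 (_ : i = o) //; apply: val_inj.
by rewrite add0r.
Qed.
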